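(* Let $\mathcal{L}$ be the Lie algebra over $\mathbb{C}$ with basis $\{D(s):s\in\mathbb{Z}\}$ and bracket $$[D(s),D(m)]=(m-s)D(s+m)-mD(m)+sD(s).$$ For $m\ge 0$ set $$y_m=\sum_{k=0}^{m+1}(-1)^{m+1-k}\binom{m+1}{k}D(-1+k).$$ (a) For $m\ge 0$, $[D(-1),y_m]=-m\,y_m$. (b) For $m,k\ge 0$, $[y_k,y_m]=(m-k)\,y_{m+k}$.
   Context: $y_m$ is the $(m+1)$-st iterated difference derivative $\partial^{m+1}D$ evaluated at $-1$, where $\partial f(s)=f(s+1)-f(s)$. *)

(* Defs.v *)
From mathcomp Require Import all_boot all_order all_algebra.
Set Implicit Arguments. Unset Strict Implicit. Unset Printing Implicit Defensive.
Import Order.TTheory GRing.Theory Num.Theory.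
Local Open Scope ring_scope.

(* The Lie algebra L over a field C (an abstract numClosedFieldType, i.e. a
   model of the complex numbers) with basis {D(s) : s in Z}, realized as the
   free C-vector space on Z: an element is a finite formal linear combination
   [:: (c_1, s_1); ...] meaning sum c_i D(s_i); two elements are equal in L
   iff their coefficient functions [coef] agree. *)
Section LieAlg.
Variable C : numClosedFieldType.

Definition Lelt := seq (C * int).

Definition coef (x : Lelt) (s : int) : C :=
  \sum_(p <- x) (if p.2 == s then p.1 else 0).

Definition Leq (x y : Lelt) : Prop := forall s, coef x s = coef y s.

Definition D (s : int) : Lelt := [:: (1, s)].
Definition Ladd (x y : Lelt) : Lelt := x ++ y.
Definition Lscale (a : C) (x : Lelt) : Lelt := [seq (a * p.1, p.2) | p <- x].

Definition bracket_basis (s m : int) : Lelt :=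
  [:: ((m - s)%:~R, s + m); (- m%:~R, m); (s%:~R, s)].

Definition bracket (x y : Lelt) : Lelt :=
  flatten [seq Lscale (p.1 * q.1) (bracket_basis p.2 q.2) | p <- x, q <- y].

Definition y (m : nat) : Lelt :=
  flatten [seq Lscale ((-1) ^+ (m.+1 - k) * ('C(m.+1, k))%:R) (D (-1 + k%:Z))
          | k <- iota 0 m.+2].

End LieAlg.

(* Main.v *)
Require Import Defs.
From mathcomp Require Import all_boot all_order all_algebra.
From mathcomp Require Import ring lra zify.
Import Order.TTheory GRing.Theory Num.Theory.
Local Open Scope ring_scope.

Section S.
Variable C : numClosedFieldType.

Definition pc (p : {poly C}) (v : int) : C :=
  match v with Posz n => p`_n | Negz _ => 0 end.

Lemma coef_cat (x z : Lelt C) s : coef (x ++ z) s = coef x s + coef z s.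
Proof. by rewrite /coef big_cat. Qed.

Lemma coef_scale a (x : Lelt C) s : coef (Lscale a x) s = a * coef x s.
Proof.
rewrite /coef /Lscale big_map mulr_sumr; apply: eq_bigr => p _ /=.
by case: eqP; rewrite ?mulr0.
Qed.

Lemma coef_bracket (x z : Lelt C) s :
  coef (bracket x z) s =
  \sum_(p <- x) \sum_(q <- z) p.1 * q.1 * coef (bracket_basis C p.2 q.2) s.
Proof.
rewrite /coef /bracket big_flatten /= big_allpairs_dep.
apply: eq_bigr => p _; apply: eq_bigr => q _.
have := coef_scale (p.1 * q.1) (bracket_basis C p.2 q.2) s; rewrite /coef => ->; reflexivity.
Qed.

Lemma bb_coef (i j : nat) u :
  coef (bracket_basis C (-1 + i%:Z) (-1 + j%:Z)) u =
  ((i + j)%:Z == u + 2)%:R * (j%:R - i%:R) + (j%:Z == u + 1)%:R * (1 - j%:R)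
  + (i%:Z == u + 1)%:R * (i%:R - 1) :> C.
Proof.
rewrite /coef /bracket_basis !big_cons big_nil /=.
have E1 : ((-1 + i%:Z) + (-1 + j%:Z) == u) = ((i + j)%:Z == u + 2).
  by apply/eqP/eqP; lia.
have E2 : ((-1 + j%:Z) == u) = (j%:Z == u + 1) by apply/eqP/eqP; lia.
have E3 : ((-1 + i%:Z) == u) = (i%:Z == u + 1) by apply/eqP/eqP; lia.
rewrite E1 E2 E3.
case: (_ == u + 2); case: (_ == u + 1); case: (_ == u+1);
rewrite /= ?mul1r ?mul0r ?add0r ?addr0 ?(rmorphD, rmorphB, rmorphN) /=; try ring.
Qed.

Definition P (m : nat) : {poly C} := ('X - 1%:P) ^+ m.+1.

Lemma size_P m : size (P m) = m.+2.
Proof. by rewrite /P size_exp_XsubC. Qed.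

Lemma polyNE (p : {poly C}) N : (size p <= N)%N -> p = \sum_(i < N) p`_i *: 'X^i.
Proof.
move=> hN; rewrite -poly_def; apply/polyP => i; rewrite coef_poly.
by case: ltnP => // h; rewrite nth_default // (leq_trans hN h).
Qed.

Lemma coef_P m i : (i < m.+2)%N ->
  (P m)`_i = (-1) ^+ (m.+1 - i) * ('C(m.+1, i))%:R.
Proof.
move=> hi; rewrite /P addrC exprDn coef_sum.
rewrite (bigD1 (Ordinal hi)) //= big1 ?addr0.
  by rewrite coefMn -rmorphN -rmorphXn coefCM coefXn eqxx mulr1 mulr_natr.
move=> j /negbTE hj; rewrite coefMn -rmorphN -rmorphXn coefCM coefXn.
suff -> : (i == j) = false by rewrite mulr0 mul0rn.
by apply/negbTE; apply: contraFN hj => /eqP h; apply/eqP/val_inj.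
Qed.

Lemma y_eq m : y C m = [seq ((P m)`_i, -1 + i%:Z) | i <- iota 0 m.+2].
Proof.
rewrite /y -[RHS]flatten_map1; f_equal.
apply/eq_in_map => i; rewrite mem_iota add0n => /= hi.
by rewrite /Lscale /D /= mulr1 coef_P.
Qed.

Lemma sum_single (q : {poly C}) N v : (size q <= N)%N ->
  \sum_(j < N) q`_j * (j%:Z == v)%:R = pc q v.
Proof.
move=> hN; case: v => [n|n] /=.
  rewrite {2}(polyNE _ _ hN) coef_sum; apply: eq_bigr => j _.
  by rewrite coefZ coefXn eqz_nat eq_sym.
by rewrite big1 // => j _; rewrite mulr0.
Qed.

Lemma sum_conv (p q : {poly C}) N1 N2 v : (size p <= N1)%N -> (size q <= N2)%N ->
  \sum_(i < N1) \sum_(j < N2) p`_i * q`_j * ((i + j)%:Z == v)%:R = pc (p * q) v.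
Proof.
move=> h1 h2; case: v => [n|n] /=.
  rewrite {2}(polyNE _ _ h1) {2}(polyNE _ _ h2) big_distrl coef_sum; apply: eq_bigr => i _.
  rewrite big_distrr coef_sum; apply: eq_bigr => j _ /=.
  by rewrite -scalerAl -scalerAr scalerA -exprD coefZ coefXn eqz_nat eq_sym.
by rewrite big1 // => i _; rewrite big1 // => j _; rewrite mulr0.
Qed.

Lemma pcB p q v : pc (p - q) v = pc p v - pc q v.
Proof. by case: v => n /=; rewrite ?coefB ?subr0. Qed.
Lemma pcD p q v : pc (p + q) v = pc p v + pc q v.
Proof. by case: v => n /=; rewrite ?coefD ?addr0. Qed.
Lemma pcZ c p v : pc (c *: p) v = c * pc p v.
Proof. by case: v => n /=; rewrite ?coefZ ?mulr0. Qed.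
Lemma pcX p v : pc ('X * p) (v + 1) = pc p v.
Proof.
rewrite mulrC; case: v => [n|[|n]].
- have -> : Posz n + 1 = Posz n.+1 by lia. 
  by rewrite /= coefMX.
- have -> : Negz 0 + 1 = Posz 0 by []. 
  by rewrite /= coefMX.
- have -> : Negz n.+1 + 1 = Negz n by lia. 
  by [].
Qed.

Lemma coefXD (p : {poly C}) j : ('X * p^`())`_j = p`_j *+ j.
Proof. by rewrite mulrC coefMX; case: j => //= j; rewrite coef_deriv. Qed.

Lemma coef_y m u : coef (y C m) u = pc (P m) (u + 1).
Proof.
rewrite y_eq /coef big_map.
have -> : iota 0 m.+2 = index_iota 0 m.+2 by rewrite /index_iota subn0.
rewrite big_mkord -(sum_single _ _ (u+1) (eq_leq (size_P m))); apply: eq_bigr => i _.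
have -> : (-1 + (i : nat)%:Z == u) = ((i : nat)%:Z == u + 1) by apply/eqP/eqP; lia.
by case: eqP; rewrite ?mulr1 ?mulr0.
Qed.

Lemma sumP0 m : \sum_(i < m.+2) (P m)`_i = 0.
Proof.
have := horner_coef_wide 1 (eq_leq (size_P m)).
rewrite /P horner_exp hornerXsubC subrr expr0n /= => /esym E.
rewrite -[RHS]E.
by apply: eq_bigr => i _; rewrite expr1n mulr1.
Qed.

Lemma size_XD (p : {poly C}) : (size ('X * p^`())%R <= size p)%N.
Proof. by apply/leq_sizeP => j hj; rewrite coefXD nth_default // mul0rn. Qed.

Lemma iotaE n : iota 0 n = index_iota 0 n.
Proof. by rewrite /index_iota subn0. Qed.

Lemma coef_bry k m u : coef (bracket (y C k) (y C m)) u =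
  \sum_(i < k.+2) \sum_(j < m.+2) (P k)`_i * (P m)`_j *
  (((i + j)%:Z == u + 2)%:R * (j%:R - i%:R) + (j%:Z == u + 1)%:R * (1 - j%:R)
  + (i%:Z == u + 1)%:R * (i%:R - 1)).
Proof.
rewrite coef_bracket !y_eq big_map iotaE big_mkord; apply: eq_bigr => i _.
rewrite big_map iotaE big_mkord; apply: eq_bigr => j _ /=.
by rewrite bb_coef.
Qed.

Lemma polyid k m : P k * ('X * (P m)^`()) - ('X * (P k)^`()) * P m =
   'X * ((m%:Z - k%:Z)%:~R *: P (m + k)).
Proof.
rewrite /P !deriv_exp derivB derivX derivC subr0 mul1r -mul_polyC.
rewrite !rmorphB /= -addSn exprD !exprS.
rewrite -[(m%:Z)%:~R]/(m%:R) -[(k%:Z)%:~R]/(k%:R) !polyC_natr.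
ring.
Qed.

Lemma dsplit (M N : nat) (F G H : 'I_M -> 'I_N -> C) :
  \sum_i \sum_j (F i j + G i j + H i j) =
  \sum_i \sum_j F i j + \sum_i \sum_j G i j + \sum_i \sum_j H i j.
Proof. by rewrite -!big_split; apply: eq_bigr => i _; rewrite -!big_split. Qed.

Lemma partb k m u : coef (bracket (y C k) (y C m)) u =
  coef (Lscale ((m%:Z - k%:Z)%:~R) (y C (m + k))) u.
Proof.
rewrite coef_bry coef_scale coef_y.
rewrite (eq_bigr (fun i : 'I_k.+2 => \sum_(j < m.+2)
   ((P k)`_i * ('X * (P m)^`())`_j * ((i + j)%:Z == u + 2)%:R
    - ('X * (P k)^`())`_i * (P m)`_j * ((i + j)%:Z == u + 2)%:R
   + (P k)`_i * ((P m)`_j * (j%:Z == u + 1)%:R * (1 - j%:R))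
   + (P k)`_i * ((i%:Z == u + 1)%:R * (i%:R - 1)) * (P m)`_j))); last first.
  move=> i _; apply: eq_bigr => j _; rewrite !coefXD; ring.
rewrite dsplit.
rewrite (eq_bigr (fun i : 'I_k.+2 => \sum_(j < m.+2)
   (P k)`_i * ('X * (P m)^`())`_j * ((i + j)%:Z == u + 2)%:R
   - \sum_(j < m.+2) ('X * (P k)^`())`_i * (P m)`_j * ((i + j)%:Z == u + 2)%:R)); last first.
  by move=> i _; rewrite sumrB.
rewrite sumrB (sum_conv _ _ _ _ _ (eq_leq (size_P k)) (leq_trans (size_XD _) (eq_leq (size_P m)))).
rewrite (sum_conv _ _ _ _ _ (leq_trans (size_XD _) (eq_leq (size_P k))) (eq_leq (size_P m))).
rewrite (eq_bigr (fun i : 'I_k.+2 => (P k)`_i * \sum_(j < m.+2) (P m)`_j * (j%:Z == u + 1)%:R * (1 - j%:R))); last first.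
  by move=> i _; rewrite mulr_sumr.
rewrite -mulr_suml sumP0 mul0r addr0.
rewrite (eq_bigr (fun i : 'I_k.+2 => (P k)`_i * ((i%:Z == u + 1)%:R * (i%:R - 1)) * \sum_(j < m.+2) (P m)`_j)); last first.
  by move=> i _; rewrite mulr_sumr.
rewrite sumP0 big1 ?addr0; last by move=> i _; rewrite mulr0.
rewrite -pcB polyid.
have -> : u + 2 = (u + 1) + 1 by rewrite -addrA.
by rewrite pcX pcZ.
Qed.

Lemma polyid2 m : (P m)^`() + (P m - 'X * (P m)^`()) = - (m%:R) *: P m.
Proof.
rewrite /P !deriv_exp derivB derivX derivC subr0 mul1r -mul_polyC.
rewrite rmorphN /= polyC_natr !exprS.
ring.
Qed.

Lemma parta m u : coef (bracket (D C (-1)) (y C m)) u =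
  coef (Lscale (- (m%:R)) (y C m)) u.
Proof.
rewrite coef_bracket coef_scale coef_y big_cons big_nil addr0 y_eq big_map iotaE big_mkord /=.
rewrite (eq_bigr (fun j : 'I_m.+2 =>
   ('X * (P m)^`())`_j * (j%:Z == u + 2)%:R
   + (P m - 'X * (P m)^`())`_j * (j%:Z == u + 1)%:R
   + (P m)`_j * ((0%N%:Z == u + 1)%:R * (0%:R - 1)))); last first.
  move=> j _ /=.
  have -> : (-1 : int) = -1 + (0%N)%:Z by rewrite addr0.
  rewrite bb_coef coefB coefXD add0n; ring.
rewrite !big_split /= !(sum_single _ _ _ (leq_trans (size_XD _) (eq_leq (size_P m)))).
have hs : (size (P m - 'X * (P m)^`())%R <= m.+2)%N.
  by apply/leq_sizeP => j hj; rewrite coefB coefXD nth_default ?size_P // mul0rn subr0.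
rewrite (sum_single _ _ _ hs) -mulr_suml sumP0 mul0r addr0.
have -> : u + 2 = (u + 1) + 1 by rewrite -addrA.
by rewrite pcX -pcD polyid2 pcZ.
Qed.

End S.

Theorem lemma4 (C : numClosedFieldType) :
  (forall m : nat,
     Leq (bracket (D C (-1)) (y C m)) (Lscale (- (m%:R)) (y C m))) /\
  (forall m k : nat,
     Leq (bracket (y C k) (y C m)) (Lscale ((m%:Z - k%:Z)%:~R) (y C (m + k)))).
Proof.
split=> [m u|m k u]; [exact: parta | exact: partb].
Qed.
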